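(* Let $Y$ be a normed vector space and $A$ a nonempty closed convex subset of $Y$ such that $\operatorname{bar}(A)\neq\{0\}$ (equivalently $A\neq Y$). Then $A$ is weak-admissible at each of its points and is determined by the set $$C=\{y^*-\inf_{x\in A}y^*(x):\ y^*\in S_{Y^*}\cap(-\operatorname{bar}(A))\}.$$ Moreover, $A$ is admissible at each of its points, determined by $C$, whenever $0\notin\overline{\operatorname{conv}}^{w^*}(S_{Y^*}\cap(-\operatorname{bar}(A)))$. Consequently: (i) every closed convex set $A$ with $A\neq Y$ and $\operatorname{int}(\mathcal{R}_A)\neq\emptyset$ is admissible at each of its points, determined by $C$; (ii) in particular, every closed convex cone $A$ of $Y$ with $A\neq Y$ and $\operatorname{int}(A)\neq\emptyset$ is admissible at each of its points, determined by $S_{Y^*}\cap A^*$.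
   Context: $Y^*$ is the dual of $Y$ with the weak-star topology, $S_{Y^*}$ its unit sphere, $\overline{\operatorname{conv}}^{w^*}$ the $w^*$-closed convex hull. $\operatorname{bar}(A):=\{y^*\in Y^*:\sup_{y\in A}y^*(y)<+\infty\}$ (barrier cone); $\mathcal{R}_A:=\{v\in Y:x+\lambda v\in A\ \forall\lambda>0,\forall x\in A\}$ (recession cone); $A^*:=\{y^*\in Y^*:y^*(y)\ge0\ \forall y\in A\}$. Elements $y^*-c$ of $C$ are the functions $y\mapsto y^*(y)-c$. For a family $C$ of functions $\phi:Y\to\mathbb{R}$, $[C]^\times:=\{y:\phi(y)\ge0\ \forall\phi\in C\}$. $C$ is equi-Gateaux differentiable at $y$ if each $\phi$ is Gateaux differentiable at $y$ (differential $d_G\phi(y)\in Y^*$, defined via one-sided limits $t\searrow0$) and for each $v$, $\lim_{t\searrow0}\sup_{\phi\in C}|(\phi(y+tv)-\phi(y)-t\langle d_G\phi(y),v\rangle)/t|=0$; equi-lower semicontinuous at $y$ if for every $\varepsilon>0$ some open neighbourhood $O$ of $y$ satisfies $\phi(z)-\phi(y)>-\varepsilon$ for all $z\in O,\phi\in C$; $r$-equi-Lipschitz at $y$ if all $\phi\in C$ are $r$-Lipschitz on a common ball centered at $y$. $A$ is weak-admissible at $\hat y\in A$, determined by a nonempty family $C$, if: (a) $A=[C]^\times$; (b) $C$ is equi-Gateaux differentiable at $\hat y$; (c) $\{\phi\in C:\phi(\hat y)\ne0\}$ is empty or equi-lower semicontinuous at $\hat y$; (d) $\overline{\operatorname{conv}}^{w^*}\{d_G\phi(\hat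 y):\phi\in C\}$ is $w^*$-compact. $A$ is admissible at $\hat y\in A$, determined by a nonempty family $C$, if: (a) $A=[C]^\times$; (b) $C$ is equi-Gateaux differentiable and $r$-equi-Lipschitz at $\hat y$ for some $r\ge0$; (c) $0\notin\overline{\operatorname{conv}}^{w^*}\{d_G\phi(\hat y):\phi\in C\}$. *)

(* Defs.v *)
From HB Require Import structures.
From mathcomp Require Import all_boot all_order all_algebra.
From mathcomp Require Import all_classical all_reals all_analysis.
Set Implicit Arguments. Unset Strict Implicit. Unset Printing Implicit Defensive.
Import Order.TTheory GRing.Theory Num.Theory.
Import numFieldNormedType.Exports.
Local Open Scope classical_set_scope.
Local Open Scope ring_scope.

Section Defs.
Context {R : realType} {Y : normedModType R}.

(* Elements of the topological dual Y^* : continuous linear functionals,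
   represented as functions Y -> R. *)
Definition dual (f : Y -> R) : Prop :=
  [/\ forall x y : Y, f (x + y) = f x + f y,
      forall (a : R) (x : Y), f (a *: x) = a * f x
    & continuous f].

Definition dnorm (f : Y -> R) : R :=
  sup [set `|f y| | y in [set y : Y | `|y| <= 1]].

Definition dsphere : set (Y -> R) := [set f | dual f /\ dnorm f = 1].

Definition barrier (A : set Y) : set (Y -> R) :=
  [set f | dual f /\ exists M : R, forall y, A y -> f y <= M].

Definition neg_barrier (A : set Y) : set (Y -> R) :=
  [set f | barrier A (fun y => - f y)].

Definition recession (A : set Y) : set Y :=
  [set v | forall x, A x -> forall l : R, 0 < l -> A (x + l *: v)].

Definition dual_cone (A : set Y) : set (Y -> R) :=
  [set f | dual f /\ forall y, A y -> 0 <= f y].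

Definition is_cone (A : set Y) : Prop :=
  forall x, A x -> forall l : R, 0 < l -> A (l *: x).

Definition Cfam (A : set Y) : set (Y -> R) :=
  [set phi | exists f, [/\ dsphere f, neg_barrier A f &
                           phi = (fun y => f y - inf [set f x | x in A])]].

Definition pos_set (C : set (Y -> R)) : set Y :=
  [set y | forall phi, C phi -> 0 <= phi y].

Definition conv_hull (S : set (Y -> R)) : set (Y -> R) :=
  [set f | exists n (g : 'I_n -> Y -> R) (l : 'I_n -> R),
      [/\ forall i, S (g i), forall i, 0 <= l i, \sum_(i < n) l i = 1 &
          f = (fun y => \sum_(i < n) l i * g i y)]].

(* Weak-star closed convex hull (closure inside Y^* for the weak-star
   topology, i.e. the topology of pointwise convergence). *)
Definition wclconv (S : set (Y -> R)) : set (Y -> R) :=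
  [set f | dual f /\ closure (conv_hull S : set {ptws Y -> R}) f].

Definition wcompact (K : set (Y -> R)) : Prop :=
  compact (K : set {ptws Y -> R}).

Definition gateaux (phi : Y -> R) (y : Y) (d : Y -> R) : Prop :=
  dual d /\ forall v : Y,
    (fun t : R => (phi (y + t *: v) - phi y) / t) @ 0^'+ --> d v.

Definition equi_gateaux (C : set (Y -> R)) (y : Y)
    (D : (Y -> R) -> (Y -> R)) : Prop :=
  (forall phi, C phi -> gateaux phi y (D phi)) /\
  forall (v : Y) (e : R), 0 < e ->
    \forall t \near 0^'+, forall phi, C phi ->
      `|(phi (y + t *: v) - phi y - t * D phi v) / t| <= e.

Definition equi_lsc (C : set (Y -> R)) (y : Y) : Prop :=
  forall e : R, 0 < e -> \forall z \near y, forall phi, C phi ->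
    - e < phi z - phi y.

Definition equi_lipschitz (C : set (Y -> R)) (y : Y) (r : R) : Prop :=
  exists2 delta : R, 0 < delta &
    forall phi, C phi -> forall x z, ball y delta x -> ball y delta z ->
      `|phi x - phi z| <= r * `|x - z|.

Definition weak_admissible (A : set Y) (y : Y) (C : set (Y -> R)) : Prop :=
  [/\ A y, C !=set0, A = pos_set C &
    exists D, [/\ equi_gateaux C y D,
      (let C' := [set phi | C phi /\ phi y <> 0] in
         C' = set0 \/ equi_lsc C' y) &
      wcompact (wclconv (D @` C))]].

Definition admissible (A : set Y) (y : Y) (C : set (Y -> R)) : Prop :=
  [/\ A y, C !=set0, A = pos_set C &
    exists D, [/\ equi_gateaux C y D,
      (exists2 r : R, 0 <= r & equi_lipschitz C y r) &
      ~ wclconv (D @` C) (fun _ => 0)]].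

End Defs.

(* Main.v *)
Require Import Defs.
From HB Require Import structures.
From mathcomp Require Import all_boot all_order all_algebra.
From mathcomp Require Import all_classical all_reals all_analysis.
From mathcomp Require Import ring lra.
Import Order.TTheory GRing.Theory Num.Theory.
Import numFieldNormedType.Exports.
Local Open Scope classical_set_scope.
Local Open Scope ring_scope.
Set Implicit Arguments. Unset Strict Implicit. Unset Printing Implicit Defensive.

Section P1.
Context {R : realType} {Y : normedModType R}.

Definition lin (f : Y -> R) :=
  (forall x y : Y, f (x + y) = f x + f y) /\ (forall (a : R) (x : Y), f (a *: x) = a * f x).

Lemma dual_lin (f : Y -> R) : dual f -> lin f.
Proof. by case. Qed.

Lemma lin0 (f : Y -> R) : lin f -> f 0 = 0.
Proof. by case=> _ h; rewrite -(scale0r (0:Y)) h mul0r. Qed.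

Lemma linN f x : lin f -> f (- x) = - f x.
Proof. by case=> _ h; rewrite -scaleN1r h mulN1r. Qed.

Lemma linB f x y : lin f -> f (x - y) = f x - f y.
Proof. by move=> hf; rewrite hf.1 linN. Qed.

Lemma lin_dual (f : Y -> R) : lin f -> (forall y, `|f y| <= `|y|) -> dual f.
Proof.
move=> hf hb; split; [exact: hf.1|exact: hf.2|].
move=> x; apply/cvgrPdist_lt => e e0.
near=> z.
rewrite -linB //; apply: (le_lt_trans (hb _)).
near: z; apply/nbhs_ballP; exists e => //= z.
by rewrite -ball_normE /=.
Unshelve. all: by end_near.
Qed.

Lemma dual_bounded (f : Y -> R) : dual f -> exists2 M : R, 0 < M & forall y, `|f y| <= M * `|y|.
Proof.
case=> fD fZ fc.
have hf : lin f by [].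
have := fc 0 => /cvgrPdist_lt /(_ 1 ltr01); rewrite (lin0 hf).
move=> /nbhs_ballP [d /= d0 hd].
exists (2 / d); first by rewrite divr_gt0.
move=> y; have [->|y0] := eqVneq y 0; first by rewrite (lin0 hf) !normr0 mulr0.
have ny0 : 0 < `|y| by rewrite normr_gt0.
pose z := (d / (2 * `|y|)) *: y.
have zb : ball (0:Y) d z.
  rewrite -ball_normE /= sub0r normrN normrZ ger0_norm; last first.
    by rewrite divr_ge0 ?mulr_ge0 // ltW.
  have -> : d / (2 * `|y|) * `|y| = d / 2 by field; rewrite gt_eqF.
  by rewrite ltr_pdivrMr // ltr_pMr // ltr1n.
have := hd _ zb; rewrite sub0r normrN fZ normrM ger0_norm; last first.
  by rewrite divr_ge0 ?mulr_ge0 // ltW.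
move=> h.
have c0 : 0 <= 2 / d * `|y| by rewrite mulr_ge0 // divr_ge0 // ltW.
rewrite {1}(_ : `|f y| = (d / (2 * `|y|) * `|f y|) * (2 / d * `|y|)); last first.
  by field; rewrite ?gt_eqF.
by rewrite -[X in _ <= X]mul1r ler_wpM2r // ltW.
Qed.

Definition dball (f : Y -> R) := [set `|f y| | y in [set y : Y | `|y| <= 1]].

Lemma dball_ne (f : Y -> R) : dball f !=set0.
Proof. by exists `|f 0|; exists 0 => //=; rewrite normr0. Qed.

Lemma dball_ub (f : Y -> R) : dual f -> has_ubound (dball f).
Proof.
move=> fd; have [M M0 hM] := dual_bounded fd.
exists M => _ [y /= y1 <-]; apply: (le_trans (hM y)).
by rewrite ler_piMr // ltW.
Qed.

Lemma dn_ub (f : Y -> R) : dual f -> forall y, `|f y| <= dnorm f * `|y|.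
Proof.
move=> fd y; have hf := dual_lin fd.
have [->|y0] := eqVneq y 0; first by rewrite (lin0 hf) !normr0 mulr0.
have ny0 : 0 < `|y| by rewrite normr_gt0.
have : dball f `|f (`|y|^-1 *: y)|.
  exists (`|y|^-1 *: y) => //=.
  by rewrite normrZ normfV normr_id mulVf ?gt_eqF.
move=> /(ub_le_sup (dball_ub fd)).
rewrite hf.2 normrM normfV normr_id => h.
by rewrite -ler_pdivrMr // mulrC.
Qed.

Lemma dn_ge0 (f : Y -> R) : dual f -> 0 <= dnorm f.
Proof.
move=> fd; apply: le_trans (ub_le_sup (dball_ub fd) _).
  exact: normr_ge0 (f 0).
by exists 0 => //=; rewrite normr0.
Qed.

Lemma dn_le (f : Y -> R) c : 0 <= c -> (forall y, `|f y| <= c * `|y|) -> dnorm f <= c.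
Proof.
move=> c0 h; apply: ge_sup; first exact: dball_ne.
move=> _ [y /= y1 <-]; apply: (le_trans (h y)).
by rewrite ler_piMr.
Qed.

Lemma dn_eq0 (f : Y -> R) : dual f -> dnorm f = 0 -> forall y, f y = 0.
Proof.
move=> fd h y; apply/normr0_eq0/eqP; rewrite eq_le normr_ge0 andbT.
by have := dn_ub fd y; rewrite h mul0r.
Qed.

Lemma lin_dualM (f : Y -> R) (M : R) : lin f -> 0 <= M -> (forall y, `|f y| <= M * `|y|) -> dual f.
Proof.
move=> hf M0 hb; split; [exact: hf.1|exact: hf.2|].
move=> x; apply/cvgrPdist_lt => e e0.
have M1 : 0 < M + 1 by lra.
near=> z.
rewrite -linB //; apply: (le_lt_trans (hb _)).
have : `|x - z| < e / (M + 1).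
  near: z; apply/nbhs_ballP; exists (e / (M + 1)); first by apply: divr_gt0.
  by move=> z; rewrite -ball_normE /=.
rewrite ltr_pdivlMr // => h.
have : M * `|x - z| <= (M + 1) * `|x - z| by rewrite ler_wpM2r // lerDl.
lra.
Unshelve. all: by end_near.
Qed.

End P1.

Section HBsec.
Context {R : realType} {E : lmodType R}.

Definition sublin (p : E -> R) :=
  (forall x y, p (x + y) <= p x + p y) /\ (forall (t : R) x, 0 < t -> p (t *: x) = t * p x).

Definition glin (f : E -> R) :=
  (forall x y : E, f (x + y) = f x + f y) /\ (forall (a : R) (x : E), f (a *: x) = a * f x).

Lemma sublin0 p : sublin p -> p 0 = 0.
Proof.
move=> [_ hp]; have := hp 2 0; rewrite scaler0 => /(_ ltac:(lra)) h; lra.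
Qed.

Lemma sublinZ0 p t x : sublin p -> 0 <= t -> p (t *: x) = t * p x.
Proof.
move=> hp; rewrite le_eqVlt => /orP[/eqP <-|t0]; last exact: hp.2.
by rewrite scale0r mul0r sublin0.
Qed.

Lemma sublin_lb p x : sublin p -> - p (- x) <= p x.
Proof.
move=> hp; have := hp.1 x (- x); rewrite subrr sublin0 // => h; lra.
Qed.

Lemma inf_le_el (S : set R) (c z : R) : (forall w, S w -> c <= w) -> S z -> inf S <= z.
Proof. by move=> hc Sz; apply: ge_inf => //; exists c. Qed.

Lemma le_inf_el (S : set R) (c : R) : S !=set0 -> (forall w, S w -> c <= w) -> c <= inf S.
Proof. by move=> ne hc; apply: lb_le_inf. Qed.

Lemma minimal_linear q : sublin q ->
  (forall s, sublin s -> (forall x, s x <= q x) -> forall x, q x <= s x) -> glin q.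
Proof.
move=> hq hmin.
have qneg y : q (- y) = - q y.
  pose qy x := inf [set q (x + s *: y) - s * q y | s in [set s : R | 0 <= s]].
  have lbq x : forall w, [set q (x + s *: y) - s * q y | s in [set s : R | 0 <= s]] w ->
      - q (- x) <= w.
    move=> _ [s /= s0 <-].
    have := hq.1 (x + s *: y) (- x).
    rewrite addrC addKr sublinZ0 // => h; lra.
  have ne x : [set q (x + s *: y) - s * q y | s in [set s : R | 0 <= s]] !=set0.
    by eexists; exists 0; rewrite /= ?lexx.
  have qyle x s : 0 <= s -> qy x <= q (x + s *: y) - s * q y.
    by move=> s0; apply: (inf_le_el (lbq x)); exists s.
  have qy_q x : qy x <= q x.
    by have := qyle x 0 (lexx _); rewrite scale0r addr0 mul0r subr0.
  have sq : sublin qy.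
    split.
    - move=> x1 x2.
      have h1 : forall s2, 0 <= s2 -> qy (x1 + x2) - (q (x2 + s2 *: y) - s2 * q y) <= qy x1.
        move=> s2 s20; apply: le_inf_el (ne x1) _ => _ [s1 /= s10 <-].
        have := qyle (x1 + x2) (s1 + s2) (addr_ge0 s10 s20).
        have := hq.1 (x1 + s1 *: y) (x2 + s2 *: y).
        rewrite (_ : x1 + s1 *: y + (x2 + s2 *: y) = x1 + x2 + (s1 + s2) *: y); last first.
          by rewrite scalerDl addrACA.
        move=> a b; lra.
      have : qy (x1 + x2) - qy x1 <= qy x2.
        apply: le_inf_el (ne x2) _ => _ [s2 /= s20 <-].
        have := h1 s2 s20; lra.
      lra.
    - move=> t x t0; apply/eqP; rewrite eq_le; apply/andP; split.
      + have : t^-1 * qy (t *: x) <= qy x.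
          apply: le_inf_el (ne x) _ => _ [s /= s0 <-].
          have := qyle (t *: x) (t * s) (mulr_ge0 (ltW t0) s0).
          rewrite -scalerA -scalerDr (hq.2 _ _ t0) => h.
          rewrite -(ler_pM2l t0) mulrA mulfV ?gt_eqF // mul1r; lra.
        by rewrite -(ler_pM2l t0) mulrA mulfV ?gt_eqF // mul1r.
      + apply: le_inf_el (ne (t *: x)) _ => _ [s /= s0 <-].
        have h := qyle x (s / t) (divr_ge0 s0 (ltW t0)).
        have e : t * q (x + (s / t) *: y) = q (t *: x + s *: y).
          by rewrite -(hq.2 _ _ t0) scalerDr scalerA mulrCA mulfV ?gt_eqF // mulr1.
        rewrite -e (_ : s * q y = t * (s / t * q y)); last by field; rewrite gt_eqF.
        by rewrite -mulrBr ler_pM2l.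
  have := hmin qy sq qy_q (- y).
  have := qyle (- y) 1 ler01; rewrite scale1r addNr sublin0 // mul1r sub0r.
  have := hq.1 y (- y); rewrite subrr sublin0 // => a b c.
  apply/eqP; rewrite eq_le; apply/andP; split; lra.
split.
- move=> x y; apply/eqP; rewrite eq_le hq.1 /=.
  have := hq.1 (x + y) (- y); rewrite addrK qneg => h; lra.
- move=> a x; have [a0|a0|->] := ltgtP a 0; last by rewrite scale0r mul0r sublin0.
  + have := hq.2 (- a) x; rewrite oppr_gt0 => /(_ a0); rewrite scaleNr qneg mulNr.
    exact: oppr_inj.
  + exact: hq.2.
Qed.


Lemma sublin_minorant p : sublin p -> exists f, glin f /\ forall x, f x <= p x.
Proof.
move=> hp.
pose T := {q : E -> R | sublin q /\ forall x, q x <= p x}.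
pose Rl (a b : T) := `[< forall x, sval b x <= sval a x >].
have t0 : T by exists p; split => // x.
have Rrefl : forall a, Rl a a by move=> a; apply/asboolP => x.
have Rtrans : forall a b c, Rl a b -> Rl b c -> Rl a c.
  move=> a b c /asboolP ab /asboolP bc; apply/asboolP => x.
  exact: le_trans (bc x) (ab x).
have Rchain : forall A : set T, total_on A (fun a b => Rl a b) ->
    exists t, forall s, A s -> Rl s t.
  move=> A Atot.
  case: (pselect (A !=set0)) => [[a0 Aa0]|nA]; last first.
    by exists t0 => s As; exfalso; apply: nA; exists s.
  pose S x := [set sval a x | a in A].
  pose m x := inf (S x).
  have lbS x : forall w, S x w -> - p (- x) <= w.
    move=> _ [a Aa <-]; case: (svalP a) => sa ap.
    apply: le_trans (sublin_lb x sa); rewrite lerN2; exact: ap.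
  have neS x : S x !=set0 by exists (sval a0 x); exists a0.
  have mle x a : A a -> m x <= sval a x.
    by move=> Aa; apply: (inf_le_el (lbS x)); exists a.
  have sm : sublin m.
    split.
    - move=> x y; apply/ler_addgt0Pr => e e0.
      have e20 : 0 < e / 2 by rewrite divr_gt0.
      have [_ [a1 Aa1 <-] h1] := inf_adherent e20 (conj (neS x) (ex_intro _ _ (lbS x))).
      have [_ [a2 Aa2 <-] h2] := inf_adherent e20 (conj (neS y) (ex_intro _ _ (lbS y))).
      rewrite -/(m x) -/(m y) in h1 h2.
      have [/asboolP r12|/asboolP r21] := Atot _ _ Aa1 Aa2.
      + have := mle (x + y) a2 Aa2; have := (svalP a2).1.1 x y.
        have := r12 x; lra.
      + have := mle (x + y) a1 Aa1; have := (svalP a1).1.1 x y.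
        have := r21 y; lra.
    - move=> t x t0'; apply/eqP; rewrite eq_le; apply/andP; split.
      + have : t^-1 * m (t *: x) <= m x.
          apply: le_inf_el (neS x) _ => _ [a Aa <-].
          have := mle (t *: x) a Aa; rewrite ((svalP a).1.2 _ _ t0') => h.
          by rewrite -(ler_pM2l t0') mulrA mulfV ?gt_eqF // mul1r.
        by rewrite -(ler_pM2l t0') mulrA mulfV ?gt_eqF // mul1r.
      + apply: le_inf_el (neS (t *: x)) _ => _ [a Aa <-].
        by rewrite ((svalP a).1.2 _ _ t0') ler_pM2l //; apply: mle.
  have mp x : m x <= p x by apply: le_trans (mle x a0 Aa0) _; exact: (svalP a0).2.
  exists (exist _ m (conj sm mp)) => a Aa; apply/asboolP => x /=; exact: mle.
have [t tmax] := ZL_preorder t0 Rrefl Rtrans Rchain.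
exists (sval t); split; last exact: (svalP t).2.
apply: minimal_linear; first exact: (svalP t).1.
move=> s ss sle x.
have sp : forall x, s x <= p x by move=> z; exact: le_trans (sle z) ((svalP t).2 z).
have := tmax (exist _ s (conj ss sp)).
have /[swap]/[apply] : Rl t (exist _ s (conj ss sp)) by apply/asboolP.
by move=> /asboolP /(_ x).
Qed.

End HBsec.

Section P3.
Context {R : realType} {Y : normedModType R}.

Lemma convexP (A : set Y) a b (t : R) : convex_set A -> A a -> A b -> 0 <= t -> t <= 1 ->
  A (t *: a + (1 - t) *: b).
Proof.
move=> cA Aa Ab t0 t1.
have := cA a b (Itv01 t0 t1) (mem_set Aa) (mem_set Ab).
by rewrite inE.
Qed.

Lemma separation (A : set Y) (y : Y) (r : R) : convex_set A -> A !=set0 -> 0 < r ->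
  (forall a, A a -> r <= `|a - y|) ->
  exists f : Y -> R, [/\ lin f, (forall x, `|f x| <= `|x|) & forall a, A a -> f y + r <= f a].
Proof.
move=> cA [a0 Aa0] r0 far.
pose D := [set la : R * Y | 0 <= la.1 /\ A la.2].
pose S x := [set `|x + la.1 *: (la.2 - y)| - la.1 * r | la in D].
pose p x := inf (S x).
have lbS x : forall w, S x w -> - `|x| <= w.
  move=> _ [[l a] [/= l0 Aa] <-].
  have h1 := far a Aa.
  have h2 : `|l *: (a - y)| <= `|x + l *: (a - y)| + `|x|.
    by rewrite -[X in `|X|](addKr x) addrC; apply: ler_normB.
  rewrite normrZ ger0_norm // in h2.
  have : l * r <= l * `|a - y| by rewrite ler_wpM2l.
  lra.
have neS x : S x !=set0 by exists (`|x + 0 *: (a0 - y)| - 0 * r); exists (0, a0).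
have ple x l a : 0 <= l -> A a -> p x <= `|x + l *: (a - y)| - l * r.
  by move=> l0 Aa; apply: (inf_le_el (lbS x)); exists (l, a).
have sp : sublin p.
  split.
  - move=> x1 x2.
    have key : forall l1 a1 l2 a2, 0 <= l1 -> A a1 -> 0 <= l2 -> A a2 ->
        p (x1 + x2) <= (`|x1 + l1 *: (a1 - y)| - l1 * r) + (`|x2 + l2 *: (a2 - y)| - l2 * r).
      move=> l1 a1 l2 a2 l10 Aa1 l20 Aa2.
      have [L0|L0] := eqVneq (l1 + l2) 0.
        have l1z : l1 = 0 by lra.
        have l2z : l2 = 0 by lra.
        rewrite l1z l2z !scale0r !mul0r !addr0 !subr0.
        apply: le_trans (ple _ 0 a0 (lexx _) Aa0) _.
        by rewrite scale0r mul0r addr0 subr0 ler_normD.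
      have Lp : 0 < l1 + l2 by rewrite lt_def L0 addr_ge0.
      pose t := l1 / (l1 + l2).
      have t0 : 0 <= t by rewrite divr_ge0 // ltW.
      have t1 : t <= 1 by rewrite ler_pdivrMr // mul1r lerDl.
      have Aa := convexP cA Aa1 Aa2 t0 t1.
      apply: le_trans (ple _ (l1 + l2) _ (ltW Lp) Aa) _.
      have e1 : (l1 + l2) * t = l1 by rewrite /t; field.
      have e2 : (l1 + l2) * (1 - t) = l2 by rewrite /t; field.
      rewrite scalerBr scalerDr !scalerA e1 e2.
      rewrite (_ : x1 + x2 + (l1 *: a1 + l2 *: a2 - (l1 + l2) *: y) =
                   (x1 + l1 *: (a1 - y)) + (x2 + l2 *: (a2 - y))); last first.
        by rewrite !scalerBr scalerDl opprD (addrACA (l1 *: a1)) (addrACA x1).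
      have := ler_normD (x1 + l1 *: (a1 - y)) (x2 + l2 *: (a2 - y)).
      rewrite mulrDl; lra.
    have : p (x1 + x2) - p x2 <= p x1.
      apply: le_inf_el (neS x1) _ => _ [[l1 a1] [/= l10 Aa1] <-].
      have : p (x1 + x2) - (`|x1 + l1 *: (a1 - y)| - l1 * r) <= p x2.
        apply: le_inf_el (neS x2) _ => _ [[l2 a2] [/= l20 Aa2] <-].
        have := key l1 a1 l2 a2 l10 Aa1 l20 Aa2; lra.
      lra.
    lra.
  - move=> t x t0; apply/eqP; rewrite eq_le; apply/andP; split.
    + have : t^-1 * p (t *: x) <= p x.
        apply: le_inf_el (neS x) _ => _ [[l a] [/= l0 Aa] <-].
        have := ple (t *: x) (t * l) a (mulr_ge0 (ltW t0) l0) Aa.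
        rewrite -scalerA -scalerDr normrZ gtr0_norm // => h.
        rewrite -(ler_pM2l t0) mulrA mulfV ?gt_eqF // mul1r.
        by rewrite mulrBr mulrA.
      by rewrite -(ler_pM2l t0) mulrA mulfV ?gt_eqF // mul1r.
    + apply: le_inf_el (neS (t *: x)) _ => _ [[l a] [/= l0 Aa] <-].
      have h := ple x (l / t) a (divr_ge0 l0 (ltW t0)) Aa.
      have e : t *: (x + (l / t) *: (a - y)) = t *: x + l *: (a - y).
        by rewrite scalerDr scalerA mulrCA mulfV ?gt_eqF // mulr1.
      rewrite -e normrZ gtr0_norm // (_ : l * r = t * (l / t * r)); last by field; rewrite gt_eqF.
      by rewrite -mulrBr ler_pM2l.
have [f [fl fp]] := sublin_minorant sp.
have fle x : f x <= `|x|.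
  apply: le_trans (fp x) _; apply: le_trans (ple x 0 a0 (lexx _) Aa0) _.
  by rewrite scale0r mul0r addr0 subr0.
have hl : lin f by [].
exists f; split => //.
  move=> x; rewrite ler_norml fle andbT.
  by have := fle (- x); rewrite (linN _ hl) normrN lerNl.
move=> a Aa.
have := le_trans (fp _) (ple (- (a - y)) 1 a ler01 Aa).
rewrite scale1r addNr normr0 mul1r sub0r (linN _ hl) (linB _ _ hl) => h; lra.
Qed.

End P3.

Section P4.
Context {R : realType} {Y : normedModType R}.

Definition Lset : set (Y -> R) := [set f | lin f /\ forall y, `|f y| <= `|y|].

Lemma ptws_nbhs (f : {ptws Y -> R}) (v : Y) (e : R) : 0 < e ->
  nbhs f [set h : {ptws Y -> R} | `|h v - f v| < e].
Proof.
move=> e0.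
have hc := @proj_continuous Y (fun _ => R) v f.
have hb : nbhs (f v : R) (ball (f v : R) e) by apply: nbhsx_ballx.
have H := hc _ hb.
have sub : (proj v @^-1` ball (f v : R) e) `<=` [set h : {ptws Y -> R} | `|h v - f v| < e].
  by move=> h; rewrite /ball /= distrC.
exact: (@filterS _ (nbhs f) (nbhs_filter f) _ _ sub H).
Qed.

Lemma closure_approx (S : set (Y -> R)) (f : Y -> R) x1 x2 x3 (e : R) :
  closure (S : set {ptws Y -> R}) f -> 0 < e ->
  exists h, [/\ S h, `|h x1 - f x1| < e, `|h x2 - f x2| < e & `|h x3 - f x3| < e].
Proof.
move=> cl e0.
have := cl _ (filterI (ptws_nbhs f x1 e0) (filterI (ptws_nbhs f x2 e0) (ptws_nbhs f x3 e0))).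
by case=> h [Sh [h1 [h2 h3]]]; exists h.
Qed.

Lemma small0 (z c : R) : 0 < c -> (forall e, 0 < e -> `|z| <= c * e) -> z = 0.
Proof.
move=> c0 h; apply/eqP; apply/negPn/negP => z0.
have nz : 0 < `|z| by rewrite normr_gt0.
have c2 : 0 < 2 * c by lra.
have := h (`|z| / (2 * c)) (divr_gt0 nz c2).
rewrite (_ : c * (`|z| / (2 * c)) = `|z| / 2); last by field; rewrite gt_eqF.
move=> h'; lra.
Qed.

Lemma closure_Lset (S : set (Y -> R)) : S `<=` Lset -> closure (S : set {ptws Y -> R}) `<=` Lset.
Proof.
move=> SL f cf; split; [split|].
- move=> x y; apply/eqP; rewrite -subr_eq0; apply/eqP.
  apply: (@small0 _ 3) => // e e0.
  have [h [Sh h1 h2 h3]] := closure_approx (x + y) x y cf e0.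
  have [[hD _] _] := SL _ Sh.
  have -> : f (x + y) - (f x + f y) =
      - (h (x + y) - f (x + y)) + (h x - f x) + (h y - f y).
    by rewrite hD; rewrite opprB; lra.
  apply: le_trans (ler_normD _ _) _; apply: le_trans (lerD (ler_normD _ _) (lexx _)) _.
  rewrite normrN; lra.
- move=> a x; apply/eqP; rewrite -subr_eq0; apply/eqP.
  apply: (@small0 _ (1 + `|a|)) => [|e e0]; first by rewrite ltr_pwDl.
  have [h [Sh h1 h2 h3]] := closure_approx (a *: x) x x cf e0.
  have [[_ hZ] _] := SL _ Sh.
  have -> : f (a *: x) - a * f x = - (h (a *: x) - f (a *: x)) + a * (h x - f x).
    by rewrite hZ; rewrite mulrBr opprB; lra.
  apply: le_trans (ler_normD _ _) _; rewrite normrN normrM mulrDl mul1r.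
  apply: lerD; first exact: ltW.
  by apply: ler_wpM2l => //; apply: ltW.
- move=> y; apply/ler_addgt0Pr => e e0.
  have [h [Sh h1 _ _]] := closure_approx y y y cf e0.
  have [_ hb] := SL _ Sh.
  have := hb y; have := ler_normD (h y) (f y - h y).
  rewrite addrC subrK distrC; move: h1; lra.
Qed.

Lemma conv_Lset (S : set (Y -> R)) : S `<=` Lset -> conv_hull S `<=` Lset.
Proof.
move=> SL _ [n [g [l [Sg l0 l1 ->]]]]; split; [split|].
- move=> x y; rewrite -big_split /=; apply: eq_bigr => i _.
  by have [[-> _] _] := SL _ (Sg i); rewrite mulrDr.
- move=> a x; rewrite mulr_sumr; apply: eq_bigr => i _.
  by have [[_ ->] _] := SL _ (Sg i); rewrite mulrCA.
- move=> y; apply: le_trans (ler_norm_sum _ _ _) _.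
  apply: le_trans (_ : \sum_(i < n) l i * `|y| <= _).
    apply: ler_sum => i _; rewrite normrM ger0_norm // ler_wpM2l //.
    by have [_ ->] := SL _ (Sg i).
  by rewrite -mulr_suml l1 mul1r.
Qed.

Lemma Lset_dual f : Lset f -> dual f.
Proof. by case=> hl hb; apply: lin_dual. Qed.

Lemma wclconv_eq (S : set (Y -> R)) : S `<=` Lset ->
  wclconv S = closure (conv_hull S : set {ptws Y -> R}).
Proof.
move=> SL; apply/seteqP; split => f; first by case.
move=> cf; split => //; apply: Lset_dual.
exact: closure_Lset (conv_Lset SL) _ cf.
Qed.

Lemma wcompact_Lset (S : set (Y -> R)) : S `<=` Lset -> wcompact (wclconv S).
Proof.
move=> SL; rewrite /wcompact wclconv_eq //.
pose K := [set f : {ptws Y -> R} | forall y, (`[- `|y|, `|y|]%classic : set R) (f y)].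
have cK : compact K.
  by apply: (@tychonoff Y (fun _ => R) (fun y => `[- `|y|, `|y|]%classic)) => y;
     exact: segment_compact.
have cc : closed (closure (conv_hull S : set {ptws Y -> R})) by exact: closed_closure.
apply: (subclosed_compact cc cK).
move=> f /(closure_Lset (conv_Lset SL)) [_ hb] y /=.
by rewrite in_itv /= -ler_norml hb.
Qed.

Lemma not_wclconv0 (S : set (Y -> R)) (v : Y) (c : R) : 0 < c ->
  (forall f, S f -> c <= f v) -> ~ wclconv S (fun _ => 0).
Proof.
move=> c0 hS [_ cl].
have [h [[n [g [l [Sg l0 l1 eh]]]] h1 _ _]] := closure_approx v v v cl c0.
move: h1; rewrite eh subr0 => h1.
have : c <= \sum_(i < n) l i * g i v.
  apply: le_trans (_ : \sum_(i < n) l i * c <= _).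
    by rewrite -mulr_suml l1 mul1r.
  by apply: ler_sum => i _; rewrite ler_wpM2l // hS.
move: h1; rewrite ltr_norml => /andP [_ a] b; lra.
Qed.

End P4.

Section P5.
Context {R : realType} {Y : normedModType R}.

Definition Dm (phi : Y -> R) : Y -> R := fun x => phi x - phi 0.

Lemma dual_scale (f : Y -> R) (c : R) : dual f -> dual (fun x => c * f x).
Proof.
move=> fd; have [M M0 hM] := dual_bounded fd; have hl := dual_lin fd.
apply: (@lin_dualM _ _ _ (`|c| * M)).
- split; first by move=> x y; rewrite hl.1 mulrDr.
  by move=> a x; rewrite hl.2 mulrCA.
- by rewrite mulr_ge0 // ltW.
- by move=> y; rewrite normrM -mulrA ler_wpM2l.
Qed.

Lemma dsphere_Lset (f : Y -> R) : dsphere f -> Lset f.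
Proof.
case=> fd f1; split; first exact: dual_lin.
by move=> y; have := dn_ub fd y; rewrite f1 mul1r.
Qed.

Lemma normalize (f : Y -> R) : dual f -> dnorm f != 0 -> dsphere (fun x => (dnorm f)^-1 * f x).
Proof.
move=> fd n0.
have np : 0 < dnorm f by rewrite lt_def n0 (dn_ge0 fd).
have gd := dual_scale (dnorm f)^-1 fd.
have ip : 0 <= (dnorm f)^-1 by rewrite invr_ge0 ltW.
split => //; apply/eqP; rewrite eq_le; apply/andP; split.
  apply: dn_le => // y; rewrite normrM (ger0_norm ip).
  by rewrite mul1r ler_pdivrMl // dn_ub.
have : dnorm f <= dnorm f * dnorm (fun x => (dnorm f)^-1 * f x).
  apply: dn_le; first by apply: mulr_ge0; apply: dn_ge0.
  move=> y; have := dn_ub gd y; rewrite normrM (ger0_norm ip).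
  by rewrite ler_pdivrMl // mulrA.
by rewrite -[X in X <= _]mulr1 ler_pM2l.
Qed.

Lemma dsphere_nz (f : Y -> R) : dsphere f -> exists y, f y != 0.
Proof.
case=> fd f1; apply/not_existsP => h.
have : dnorm f = 0.
  have -> : dnorm f = sup (dball f) by [].
  rewrite (_ : dball f = [set 0]); first exact: sup1.
  apply/seteqP; split => [_ [y _ <-]|_ ->]; first by have /negP := h y; rewrite negbK => /eqP ->; rewrite normr0.
  by exists 0; rewrite /= ?normr0 // (lin0 (dual_lin fd)) normr0.
by rewrite f1; apply/eqP; rewrite oner_eq0.
Qed.

Lemma sep_sphere (A : set Y) (z : Y) : closed A -> convex_set A -> A !=set0 -> ~ A z ->
  exists g, dsphere g /\ exists2 r : R, 0 < r & forall a, A a -> g z + r <= g a.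
Proof.
move=> cA vA neA nAz.
have [r r0 far] : exists2 r : R, 0 < r & forall a, A a -> r <= `|a - z|.
  have : ~ closure A z by move=> /cA.
  move=> /existsNP [B] /not_implyP [nB hB].
  have [r /= r0 hr] := (nbhs_ballP _ _).1 nB.
  exists r => // a Aa; rewrite leNgt; apply/negP => ar.
  apply: hB; exists a; split => //; apply: hr.
  by rewrite -ball_normE /= distrC.
have [f [fl fb fs]] := separation vA neA r0 far.
have fd : dual f by apply: lin_dual.
have [a0 Aa0] := neA.
have fnz : dnorm f != 0.
  apply/eqP => /(dn_eq0 fd) h; have := fs _ Aa0; rewrite !h; lra.
have np : 0 < dnorm f by rewrite lt_def fnz (dn_ge0 fd).
have n1 : dnorm f <= 1 by apply: dn_le => // y; rewrite mul1r.
exists (fun x => (dnorm f)^-1 * f x); split; first exact: normalize.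
exists ((dnorm f)^-1 * r); first by rewrite mulr_gt0 // invr_gt0.
by move=> a Aa; rewrite -mulrDr; apply: ler_wpM2l; [rewrite invr_ge0 ltW | exact: fs].
Qed.

End P5.

Section P6.
Context {R : realType} {Y : normedModType R}.

Lemma Dm_diff (phi : Y -> R) a b : lin (Dm phi) -> phi a - phi b = Dm phi (a - b).
Proof. by move=> hl; rewrite linB // /Dm; lra. Qed.

Lemma aff_gateaux (C : set (Y -> R)) y : (forall phi, C phi -> dsphere (Dm phi)) ->
  equi_gateaux C y Dm.
Proof.
move=> H; split.
  move=> phi Cphi; have [fd _] := H _ Cphi; split => // v.
  have hl := dual_lin fd.
  have hq : {near 0^'+, (fun _ => Dm phi v) =1 (fun t => (phi (y + t *: v) - phi y) / t)}.
    near=> t.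
    have t0 : t != 0 by apply: lt0r_neq0; near: t; exact: nbhs_right_gt.
    by rewrite Dm_diff // (addrC y) addrK hl.2 mulrC mulKf.
  exact: cvg_trans (near_eq_cvg hq) (cvg_cst _).
move=> v e e0; apply: nearW => t phi Cphi.
have [fd _] := H _ Cphi; have hl := dual_lin fd.
by rewrite Dm_diff // (addrC y) addrK hl.2 subrr mul0r normr0 ltW.
Unshelve. all: by end_near.
Qed.

Lemma aff_lip (C : set (Y -> R)) y : (forall phi, C phi -> dsphere (Dm phi)) ->
  equi_lipschitz C y 1.
Proof.
move=> H; exists 1 => // phi Cphi x z _ _.
have [fd f1] := H _ Cphi.
by rewrite (Dm_diff _ _ (dual_lin fd)) mul1r; have := dn_ub fd (x - z); rewrite f1 mul1r.
Qed.

Lemma aff_lsc (C : set (Y -> R)) y : (forall phi, C phi -> dsphere (Dm phi)) ->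
  equi_lsc C y.
Proof.
move=> H e e0.
apply/nbhs_ballP; exists e => // z; rewrite -ball_normE /= => yz phi Cphi.
have [fd f1] := H _ Cphi.
rewrite (Dm_diff _ _ (dual_lin fd)).
have := dn_ub fd (z - y); rewrite f1 mul1r => h.
rewrite distrC in yz; move: h; rewrite ler_norml => /andP [h _]; lra.
Qed.

End P6.

Section P7.
Context {R : realType} {Y : normedModType R}.

Lemma dualN (f : Y -> R) : dual f -> dual (fun y => - f y).
Proof.
move=> fd; have -> : (fun y => - f y) = (fun y => -1 * f y).
  by apply: funext => y; rewrite mulN1r.
exact: dual_scale.
Qed.

Lemma dsphereN (f : Y -> R) : dsphere f -> dsphere (fun y => - f y).
Proof.
case=> fd f1; split; first exact: dualN.
rewrite -f1 /dnorm; congr (sup _); apply/seteqP; split => _ [y hy <-]; exists y => //=.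
  by rewrite normrN.
by rewrite normrN.
Qed.

Lemma rec_nonneg (A : set Y) (f : Y -> R) w : A !=set0 -> lin f ->
  (exists M, forall a, A a -> - f a <= M) -> recession A w -> 0 <= f w.
Proof.
move=> [a Aa] hl [M hM] rw; rewrite leNgt; apply/negP => fw.
have hMa := hM _ Aa.
pose l := (M + f a + 1) / (- f w).
have l0 : 0 < l by rewrite divr_gt0 ?oppr_gt0 //; lra.
have := hM _ (rw _ Aa _ l0); rewrite hl.1 hl.2.
have -> : l * f w = - (M + f a + 1).
  by rewrite /l; field; rewrite ?oppr_eq0 lt_eqF.
lra.
Qed.

Lemma ball_nonneg (f : Y -> R) v (r : R) : dsphere f -> 0 < r ->
  (forall x, ball v r x -> 0 <= f x) -> r / 2 <= f v.
Proof.
move=> [fd f1] r0 hb; have hl := dual_lin fd.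
have r2 : 0 < r / 2 by rewrite divr_gt0.
have key : forall u, `|u| <= 1 -> r / 2 * f u <= f v.
  move=> u u1.
  have : ball v r (v - (r / 2) *: u).
    rewrite -ball_normE /= opprB addrC subrK normrZ gtr0_norm //.
    apply: le_lt_trans (_ : r / 2 * 1 < r); first by rewrite ler_wpM2l // ltW.
    by rewrite mulr1 ltr_pdivrMr // ltr_pMr // ltr1n.
  move=> /hb; rewrite linB // hl.2; lra.
have : dnorm f <= 2 / r * f v.
  apply: ge_sup; first exact: dball_ne.
  move=> _ [u /= u1 <-]; rewrite ler_norml; apply/andP; split.
    have := key (- u); rewrite normrN => /(_ u1); rewrite linN //.
    rewrite -ler_pdivlMl // => h; rewrite lerNl; apply: le_trans h _.
    by rewrite invf_div lexx.
  have := key u u1; rewrite -ler_pdivlMl // invf_div //.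
rewrite f1 => h.
have : r / 2 * 1 <= r / 2 * (2 / r * f v) by rewrite ler_wpM2l // ltW.
rewrite mulr1 mulrA (_ : r / 2 * (2 / r) = 1) ?mul1r //; field; rewrite gt_eqF //.
Qed.

Lemma Cfam_Dm (A : set Y) phi : Cfam A phi ->
  exists f, [/\ dsphere f, neg_barrier A f & Dm phi = f].
Proof.
move=> [f [fs fb ->]]; exists f; split => //.
apply: funext => x; rewrite /Dm (lin0 (dual_lin fs.1)); lra.
Qed.

Lemma DmCfam (A : set Y) : Dm @` Cfam A = dsphere `&` neg_barrier A.
Proof.
apply/seteqP; split => f.
  by move=> [phi /Cfam_Dm [g [gs gb e]] <-]; rewrite e.
move=> [fs fb]; exists (fun y => f y - inf [set f x | x in A]).
  by exists f.
apply: funext => x; rewrite /Dm (lin0 (dual_lin fs.1)); lra.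
Qed.

Lemma Cfam_sphere (A : set Y) phi : Cfam A phi -> dsphere (Dm phi).
Proof. by move=> /Cfam_Dm [f [fs _ ->]]. Qed.

Lemma part1_common (A : set Y) : A !=set0 -> closed A -> convex_set A ->
  barrier A <> [set (fun _ => 0)] -> Cfam A !=set0 /\ A = pos_set (Cfam A).
Proof.
move=> neA cA vA nb; split.
  have [f [bf nf]] : exists f, barrier A f /\ f <> (fun _ => 0).
    apply: contrapT => nex; apply: nb; apply/seteqP; split => g.
      move=> bg; case: (pselect (g = (fun _ => 0))) => // ng.
      by exfalso; apply: nex; exists g.
    move=> /= ->; split; last by exists 0.
    apply: (@lin_dualM _ _ _ 0) => //; first by split => *; rewrite ?mulr0 ?addr0.
    by move=> y; rewrite normr0 mul0r.
  case: bf => fd [M hM].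
  have dn0 : dnorm f != 0.
    apply/eqP => /(dn_eq0 fd) h; apply: nf; exact: funext.
  have gs := dsphereN (normalize fd dn0).
  exists (fun y => - ((dnorm f)^-1 * f y) - inf [set - ((dnorm f)^-1 * f x) | x in A]).
  exists (fun y => - ((dnorm f)^-1 * f y)); split => //.
  split; first exact: dualN gs.1.
  exists ((dnorm f)^-1 * M) => a Aa; rewrite opprK.
  apply: ler_wpM2l; [by rewrite invr_ge0 dn_ge0 | exact: hM].
apply/seteqP; split.
  move=> a Aa phi [f [fs [_ [M hM]] ->]]; rewrite subr_ge0.
  apply: (inf_le_el (c := - M)); last by exists a.
  by move=> _ [x Ax <-]; have := hM _ Ax; lra.
move=> z pz; apply: contrapT => nAz.
have [g [gs [r r0 hr]]] := sep_sphere cA vA neA nAz.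
have gb : neg_barrier A g.
  split; first exact: dualN gs.1.
  by exists (- (g z + r)) => a Aa; rewrite lerN2; exact: hr.
have := pz (fun y => g y - inf [set g x | x in A]) (ex_intro _ g (And3 gs gb erefl)).
have : g z + r <= inf [set g x | x in A].
  apply: le_inf_el; first by case: neA => a Aa; exists (g a), a.
  by move=> _ [x Ax <-]; exact: hr.
lra.
Qed.

End P7.

Section P8.
Context {R : realType} {Y : normedModType R}.

Lemma part1 (A : set Y) : A !=set0 -> closed A -> convex_set A ->
     barrier A <> [set (fun _ => 0)] ->
     (forall y, A y -> weak_admissible A y (Cfam A)) /\
     (~ wclconv (dsphere `&` neg_barrier A) (fun _ => 0) ->
        forall y, A y -> admissible A y (Cfam A)).
Proof.
move=> neA cA vA nb; have [neC eqA] := part1_common neA cA vA nb.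
have H : forall phi, Cfam A phi -> dsphere (Dm phi) by move=> phi /Cfam_sphere.
split.
  move=> y Ay; split => //; exists Dm; split.
  - exact: aff_gateaux.
  - by right; apply: aff_lsc => phi [/H].
  - apply: wcompact_Lset => _ [phi /H hs <-]; exact: dsphere_Lset.
move=> hw y Ay; split => //; exists Dm; split.
- exact: aff_gateaux.
- by exists 1 => //; apply: aff_lip.
- by rewrite DmCfam.
Qed.

Lemma notT_ex (A : set Y) : A <> setT -> exists z, ~ A z.
Proof.
move=> nT; apply: contrapT => h; apply: nT; apply/seteqP; split => // x _.
by apply: contrapT => nAx; apply: h; exists x.
Qed.

Lemma part2 (A : set Y) : closed A -> convex_set A -> A <> setT ->
     (recession A)° !=set0 ->
     forall y, A y -> admissible A y (Cfam A).
Proof.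
move=> cA vA nT [v iv] y Ay.
have neA : A !=set0 by exists y.
have [z nAz] := notT_ex nT.
have [g [gs [r r0 hr]]] := sep_sphere cA vA neA nAz.
have nb : barrier A <> [set (fun _ => 0)].
  move=> eb.
  have : barrier A (fun y => - g y).
    split; first exact: dualN gs.1.
    by exists (- (g z + r)) => a Aa; rewrite lerN2; exact: hr.
  rewrite eb /= => g0.
  have [x /eqP gx] := dsphere_nz gs; apply: gx.
  by have := congr1 (fun h => h x) g0 => /= /eqP; rewrite oppr_eq0 => /eqP.
apply: (part1 neA cA vA nb).2 => //.
have [d /= d0 hd] := (nbhs_ballP _ _).1 iv.
apply: (@not_wclconv0 _ _ _ v (d / 2)); first by rewrite divr_gt0.
move=> f [fs fb]; apply: ball_nonneg => // x bx.
apply: (@rec_nonneg _ _ A) => //; first exact: dual_lin fs.1.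
  by case: fb => _ [M hM]; exists M.
exact: hd.
Qed.

Lemma cone_rec (A : set Y) : convex_set A -> is_cone A -> forall w, A w -> recession A w.
Proof.
move=> vA cA w Aw x Ax l l0.
have Alw := cA _ Aw _ l0.
have h0 : (0:R) <= 2^-1 by rewrite invr_ge0.
have h1 : (2^-1 : R) <= 1 by rewrite invf_le1 // ler1n.
have := cA _ (convexP vA Ax Alw h0 h1) 2 ltac:(by []).
have e1 : (2:R) * 2^-1 = 1 by field.
have e2 : (2:R) * (1 - 2^-1) = 1 by field.
by rewrite scalerDr scalerA e1 scale1r (scalerA 2) e2 scale1r.
Qed.

Lemma part3 (A : set Y) : closed A -> convex_set A -> is_cone A -> A <> setT ->
     A° !=set0 ->
     forall y, A y -> admissible A y (dsphere `&` dual_cone A).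
Proof.
move=> cA vA kA nT [v iv] y Ay.
have neA : A !=set0 by exists y.
have sepC : forall z, ~ A z -> exists g, [/\ dsphere g, dual_cone A g & g z < 0].
  move=> z nAz; have [g [gs [r r0 hr]]] := sep_sphere cA vA neA nAz.
  have gc : dual_cone A g.
    split; first exact: gs.1.
    move=> a Aa; apply: (rec_nonneg neA (dual_lin gs.1)) (cone_rec vA kA Aa).
    by exists (- (g z + r)) => b Ab; rewrite lerN2; exact: hr.
  exists g; split => //.
  have p1 : 0 < `|g y| + 1 by have := normr_ge0 (g y); lra.
  pose l := r / (2 * (`|g y| + 1)).
  have l0 : 0 < l by apply: divr_gt0 => //; apply: mulr_gt0.
  have := hr _ (kA _ Ay _ l0); rewrite (dual_lin gs.1).2 => h.
  have h1 : l * g y <= l * `|g y| by apply: ler_wpM2l; [exact: ltW | exact: ler_norm].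
  have e : l * (`|g y| + 1) = r / 2 by rewrite /l; field; rewrite gt_eqF.
  rewrite mulrDr mulr1 in e.
  lra.
have [z nAz] := notT_ex nT; have [g0 [gs0 gc0 _]] := sepC z nAz.
split => //.
- by exists g0.
- apply/seteqP; split.
    by move=> a Aa phi [_ [_ h]]; exact: h.
  move=> z' pz; apply: contrapT => nz; have [g [gs gc gn]] := sepC z' nz.
  by move: (pz g (conj gs gc)); rewrite leNgt gn.
- exists Dm.
  have DmE : forall phi, (dsphere `&` dual_cone A) phi -> Dm phi = phi.
    move=> phi [ps _]; apply: funext => x; rewrite /Dm (lin0 (dual_lin ps.1)) subr0 //.
  have H : forall phi, (dsphere `&` dual_cone A) phi -> dsphere (Dm phi).
    by move=> phi Cp; rewrite DmE //; case: Cp.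
  split; first exact: aff_gateaux.
    by exists 1 => //; apply: aff_lip.
  have [d /= d0 hd] := (nbhs_ballP _ _).1 iv.
  apply: (@not_wclconv0 _ _ _ v (d / 2)); first by rewrite divr_gt0.
  move=> _ [phi Cp <-]; rewrite DmE //; case: Cp => ps [_ pc].
  apply: ball_nonneg => // x bx; apply: pc; exact: hd.
Qed.

End P8.

Unset Implicit Arguments.
Theorem theorem3p7 (R : realType) (Y : normedModType R) :
  (forall A : set Y, A !=set0 -> closed A -> convex_set A ->
     barrier A <> [set (fun _ => 0)] ->
     (forall y, A y -> weak_admissible A y (Cfam A)) /\
     (~ wclconv (dsphere `&` neg_barrier A) (fun _ => 0) ->
        forall y, A y -> admissible A y (Cfam A)))
  /\
  (forall A : set Y, closed A -> convex_set A -> A <> setT ->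
     (recession A)° !=set0 ->
     forall y, A y -> admissible A y (Cfam A))
  /\
  (forall A : set Y, closed A -> convex_set A -> is_cone A -> A <> setT ->
     A° !=set0 ->
     forall y, A y -> admissible A y (dsphere `&` dual_cone A)).
Proof.
split; first exact: part1.
split; first exact: part2.
exact: part3.
Qed.
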